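(* A map $f:X\to Y$ between v-fibrant bisimplicial sets is a row-wise weak categorical equivalence (i.e. $f_{\star n}:X_{\star n}\to Y_{\star n}$ is a weak categorical equivalence for every $n\ge0$) if and only if $f_{\star0}:X_{\star0}\to Y_{\star0}$ is a weak categorical equivalence.
   Context: For a bisimplicial set $X$ and simplicial set $A$, $A\backslash X$ is the simplicial set whose $n$-simplices are maps $A\Box\Delta[n]\to X$, $(A\Box B)_{mn}=A_m\times B_n$. $X$ is v-fibrant if for every $m\ge0$ the map $\Delta[m]\backslash X\to\partial\Delta[m]\backslash X$ is a Kan fibration. $X_{\star n}$ is the $n$-th row. A map of simplicial sets $u:A\to B$ is a weak categorical equivalence if $\tau_0(B,Z)\to\tau_0(A,Z)$ is bijective for every quasi-category $Z$, where $\tau_0(A,Z)$ is the set of isomorphism classes of objects of the fundamental category of $Z^A$. *)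

(* Defs.v *)
From Stdlib Require Import Relations FunctionalExtensionality ProofIrrelevance.
From mathcomp Require Import all_boot.

Set Implicit Arguments.
Unset Strict Implicit.
Unset Printing Implicit Defensive.

Definition monob m n (f : {ffun 'I_m.+1 -> 'I_n.+1}) : bool :=
  [forall i : 'I_m.+1, forall j : 'I_m.+1, (i <= j) ==> (f i <= f j)].

Definition hom m n := {f : {ffun 'I_m.+1 -> 'I_n.+1} | monob f}.

Definition hfun m n (f : hom m n) : 'I_m.+1 -> 'I_n.+1 := fun i => sval f i.

Lemma hom_eq m n (f g : hom m n) : (forall i, hfun f i = hfun g i) -> f = g.
Proof. by move=> H; apply: val_inj; apply/ffunP => i; exact: H. Qed.

Lemma mk_hom_proof m n (h : 'I_m.+1 -> 'I_n.+1) :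
  (forall i j : 'I_m.+1, i <= j -> h i <= h j) -> monob (finfun h).
Proof.
move=> H; apply/forallP => i; apply/forallP => j; apply/implyP => /H.
by rewrite !ffunE.
Qed.

Definition mk_hom m n (h : 'I_m.+1 -> 'I_n.+1)
  (H : forall i j : 'I_m.+1, i <= j -> h i <= h j) : hom m n :=
  exist _ (finfun h) (mk_hom_proof H).

Lemma mk_homE m n h H i : hfun (@mk_hom m n h H) i = h i.
Proof. by rewrite /hfun /= ffunE. Qed.

Lemma hom_mono m n (f : hom m n) (i j : 'I_m.+1) : i <= j -> hfun f i <= hfun f j.
Proof.
case: f => f Hf; rewrite /hfun /= => Hij.
by move/forallP: Hf => /(_ i) /forallP /(_ j) /implyP; apply.
Qed.

Definition hid n : hom n n := @mk_hom n n id (fun i j H => H).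

Definition hcomp m n p (g : hom n p) (f : hom m n) : hom m p :=
  @mk_hom m p (fun i => hfun g (hfun f i))
    (fun i j H => hom_mono g (hom_mono f H)).

Lemma hcomp_id_l m n (f : hom m n) : hcomp (hid n) f = f.
Proof. by apply: hom_eq => i; rewrite !mk_homE. Qed.

Lemma hcomp_id_r m n (f : hom m n) : hcomp f (hid m) = f.
Proof. by apply: hom_eq => i; rewrite !mk_homE. Qed.

Lemma hcompA m n p q (h : hom p q) (g : hom n p) (f : hom m n) :
  hcomp h (hcomp g f) = hcomp (hcomp h g) f.
Proof. by apply: hom_eq => i; rewrite !mk_homE. Qed.

Definition coface n (i : 'I_n.+2) : hom n n.+1 :=
  @mk_hom n n.+1 (lift i) (fun a b H => ltac:(by rewrite /= leq_bump2)).

Definition hconst m : hom m 0 := @mk_hom m 0 (fun _ => ord0) (fun _ _ _ => leqnn 0).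

Record sSet := SSet {
  sx :> nat -> Type;
  act : forall m n, hom m n -> sx n -> sx m;
  act_id : forall n (x : sx n), act (hid n) x = x;
  act_comp : forall m n p (f : hom m n) (g : hom n p) (x : sx p),
      act (hcomp g f) x = act f (act g x)
}.
Arguments act {s m n} f x.

Record sMap (X Y : sSet) := SMap {
  fn : forall n, X n -> Y n;
  fn_nat : forall m n (f : hom m n) (x : X n), fn (act f x) = act f (fn x)
}.
Arguments fn {X Y} s {n} x.

Lemma sMap_eq (X Y : sSet) (f g : sMap X Y) :
  (forall n (x : X n), fn f x = fn g x) -> f = g.
Proof.
case: f => f Hf; case: g => g Hg /= H.
have E : f = g.
  by apply: functional_extensionality_dep => n; apply: functional_extensionality.
subst g; f_equal; apply: proof_irrelevance.
Qed.

Definition sId (X : sSet) : sMap X X := @SMap X X (fun n x => x) (fun _ _ _ _ => erefl).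

Lemma sComp_nat (X Y Z : sSet) (g : sMap Y Z) (f : sMap X Y) m n (h : hom m n) (x : X n) :
  fn g (fn f (act h x)) = act h (fn g (fn f x)).
Proof. by rewrite !fn_nat. Qed.

Definition sComp (X Y Z : sSet) (g : sMap Y Z) (f : sMap X Y) : sMap X Z :=
  @SMap X Z (fun n x => fn g (fn f x)) (@sComp_nat X Y Z g f).

Definition Delta (n : nat) : sSet :=
  @SSet (fun k => hom k n) (fun m k f x => hcomp x f)
    (fun k x => hcomp_id_r x)
    (fun m k p f g x => hcompA x g f).

Definition Dmap m n (f : hom m n) : sMap (Delta m) (Delta n) :=
  @SMap (Delta m) (Delta n) (fun k x => hcomp f x)
    (fun a b h x => hcompA f x h).

Definition SubS (X : sSet) (P : forall n, X n -> bool)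
  (HP : forall m n (f : hom m n) (x : X n), P n x -> P m (act f x)) : sSet.
Proof.
refine (@SSet (fun n => {x : X n | P n x})
               (fun m n f x => exist _ (act f (sval x)) (HP m n f (sval x) (svalP x)))
               _ _).
- by move=> n [x Hx]; apply: val_inj; rewrite /= act_id.
- by move=> m n p f g [x Hx]; apply: val_inj; rewrite /= act_comp.
Defined.

Definition subincl (X : sSet) P HP : sMap (@SubS X P HP) X :=
  @SMap (@SubS X P HP) X (fun n x => sval x) (fun _ _ _ _ => erefl).

Definition bdryb n k (f : hom k n) : bool :=
  ~~ [forall i : 'I_n.+1, exists x : 'I_k.+1, hfun f x == i].

Lemma bdry_stable n m k (f : hom m k) (x : hom k n) :
  bdryb x -> bdryb (hcomp x f).
Proof.
apply: contra => /forallP H; apply/forallP => i.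
case/existsP: (H i) => y /eqP <-; apply/existsP; exists (hfun f y).
by rewrite mk_homE.
Qed.

Definition Bdry n : sSet := @SubS (Delta n) (@bdryb n) (fun m k f x => @bdry_stable n m k f x).
Definition bdry_incl n : sMap (Bdry n) (Delta n) := subincl _.

Definition hornb n (k : 'I_n.+1) j (f : hom j n) : bool :=
  [exists i : 'I_n.+1, (i != k) && [forall x : 'I_j.+1, hfun f x != i]].

Lemma horn_stable n (k : 'I_n.+1) m j (f : hom m j) (x : hom j n) :
  hornb k x -> hornb k (hcomp x f).
Proof.
case/existsP => i /andP [Hik /forallP Hi]; apply/existsP; exists i.
by rewrite Hik; apply/forallP => y; rewrite mk_homE.
Qed.

Definition Horn n (k : 'I_n.+1) : sSet :=
  @SubS (Delta n) (@hornb n k) (fun m j f x => @horn_stable n k m j f x).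
Definition horn_incl n (k : 'I_n.+1) : sMap (Horn k) (Delta n) := subincl _.

(* Kan fibrations: right lifting property against all horn inclusions
   Lambda^k[n] -> Delta[n], n >= 1, 0 <= k <= n *)
Definition kan_fibration (E B : sSet) (p : sMap E B) : Prop :=
  forall n (k : 'I_n.+2) (a : sMap (Horn k) E) (b : sMap (Delta n.+1) B),
    (forall j (x : Horn k j), fn p (fn a x) = fn b (fn (horn_incl k) x)) ->
    exists l : sMap (Delta n.+1) E,
      (forall j (x : Horn k j), fn l (fn (horn_incl k) x) = fn a x) /\
      (forall j (x : Delta n.+1 j), fn p (fn l x) = fn b x).

Definition quasi_category (Z : sSet) : Prop :=
  forall n (k : 'I_n.+1), 0 < k < n -> forall a : sMap (Horn k) Z,
    exists l : sMap (Delta n) Z,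
      forall j (x : Horn k j), fn l (fn (horn_incl k) x) = fn a x.

Definition sProd (A B : sSet) : sSet.
Proof.
refine (@SSet (fun n => (A n * B n)%type)
          (fun m n f x => (act f x.1, act f x.2)) _ _).
- by move=> n [a b]; rewrite /= !act_id.
- by move=> m n p f g [a b]; rewrite /= !act_comp.
Defined.

Definition prodmap (A A' B B' : sSet) (u : sMap A A') (v : sMap B B') :
  sMap (sProd A B) (sProd A' B') :=
  @SMap (sProd A B) (sProd A' B') (fun n x => (fn u x.1, fn v x.2))
    (fun m n f x => ltac:(by rewrite /= !fn_nat)).

Definition FunS (A Z : sSet) : sSet.
Proof.
refine (@SSet (fun n => sMap (sProd A (Delta n)) Z)
          (fun m n f g => sComp g (prodmap (sId A) (Dmap f))) _ _).
- by move=> n g; apply: sMap_eq => k [a x] /=; rewrite hcomp_id_l.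
- by move=> m n p f g h; apply: sMap_eq => k [a x] /=; rewrite hcompA.
Defined.

(* The fundamental category tau_1 Z, presented by generators (edges)  *)
(* and relations (s_0 x = id_x, d_1 t = d_0 t o d_2 t); we only need  *)
(* its isomorphism relation on objects (= vertices).                  *)
Section Tau1.
Variable Z : sSet.

Definition esrc (e : Z 1) : Z 0 := act (coface (@inord 1 1)) e.
Definition etgt (e : Z 1) : Z 0 := act (coface (@inord 1 0)) e.
Definition edeg (v : Z 0) : Z 1 := act (hconst 1) v.
Definition tface (i : nat) (t : Z 2) : Z 1 := act (coface (@inord 2 i)) t.

Fixpoint is_chain (x : Z 0) (p : seq (Z 1)) (y : Z 0) : Prop :=
  match p with
  | [::] => x = y
  | e :: q => esrc e = x /\ is_chain (etgt e) q y
  end.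

Inductive hstep : seq (Z 1) -> seq (Z 1) -> Prop :=
| hstep_deg a b v : hstep (a ++ edeg v :: b) (a ++ b)
| hstep_tri a b t : hstep (a ++ tface 2 t :: tface 0 t :: b) (a ++ tface 1 t :: b).

(* equality of morphisms x -> y in tau_1 Z *)
Definition hequiv (x y : Z 0) : relation (seq (Z 1)) :=
  clos_refl_sym_trans _
    (fun p q => [/\ is_chain x p y, is_chain x q y & hstep p q]).

Definition tau1_iso (x y : Z 0) : Prop :=
  exists p q, [/\ is_chain x p y, is_chain y q x,
    hequiv x x (p ++ q) [::] & hequiv y y (q ++ p) [::]].
End Tau1.

(* weak categorical equivalence: tau_0(B,Z) -> tau_0(A,Z) bijective
   for every quasi-category Z, where tau_0(A,Z) is the set of
   isomorphism classes of objects of tau_1(Z^A); the map is induced by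
   precomposition with u x Delta[0] on objects of Z^B. *)
Definition wce (A B : sSet) (u : sMap A B) : Prop :=
  forall Z : sSet, quasi_category Z ->
    let pre (h : FunS B Z 0) : FunS A Z 0 :=
      sComp h (prodmap u (sId (Delta 0))) in
    (forall g : FunS A Z 0, exists h : FunS B Z 0, tau1_iso (pre h) g) /\
    (forall h1 h2 : FunS B Z 0,
        tau1_iso (pre h1) (pre h2) -> tau1_iso h1 h2).

Record bsSet := BSSet {
  bx :> nat -> nat -> Type;
  bact : forall m m' n n', hom m' m -> hom n' n -> bx m n -> bx m' n';
  bact_id : forall m n (x : bx m n), bact (hid m) (hid n) x = x;
  bact_comp : forall m m' m'' n n' n'' (f : hom m' m) (f' : hom m'' m')
      (g : hom n' n) (g' : hom n'' n') (x : bx m n),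
      bact (hcomp f f') (hcomp g g') x = bact f' g' (bact f g x)
}.
Arguments bact {b m m' n n'} f g x.

Record bMap (X Y : bsSet) := BMap {
  bfn : forall m n, X m n -> Y m n;
  bfn_nat : forall m m' n n' (f : hom m' m) (g : hom n' n) (x : X m n),
      bfn (bact f g x) = bact f g (bfn x)
}.
Arguments bfn {X Y} b {m n} x.

Lemma bMap_eq (X Y : bsSet) (f g : bMap X Y) :
  (forall m n (x : X m n), bfn f x = bfn g x) -> f = g.
Proof.
case: f => f Hf; case: g => g Hg /= H.
have E : f = g.
  apply: functional_extensionality_dep => m.
  apply: functional_extensionality_dep => n; exact: functional_extensionality.
subst g; f_equal; apply: proof_irrelevance.
Qed.

Lemma bComp_nat (X Y Z : bsSet) (g : bMap Y Z) (f : bMap X Y) m m' n n'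
  (f' : hom m' m) (g' : hom n' n) (x : X m n) :
  bfn g (bfn f (bact f' g' x)) = bact f' g' (bfn g (bfn f x)).
Proof. by rewrite !bfn_nat. Qed.

Definition bComp (X Y Z : bsSet) (g : bMap Y Z) (f : bMap X Y) : bMap X Z :=
  @BMap X Z (fun m n x => bfn g (bfn f x)) (@bComp_nat X Y Z g f).

Definition box (A B : sSet) : bsSet.
Proof.
refine (@BSSet (fun m n => (A m * B n)%type)
          (fun m m' n n' f g x => (act f x.1, act g x.2)) _ _).
- by move=> m n [a b]; rewrite /= !act_id.
- by move=> m m' m'' n n' n'' f f' g g' [a b]; rewrite /= !act_comp.
Defined.

Definition boxmap (A A' B B' : sSet) (u : sMap A A') (v : sMap B B') :
  bMap (box A B) (box A' B') :=
  @BMap (box A B) (box A' B') (fun m n x => (fn u x.1, fn v x.2))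
    (fun _ _ _ _ f g x => ltac:(by rewrite /= !fn_nat)).

Definition Under (A : sSet) (X : bsSet) : sSet.
Proof.
refine (@SSet (fun n => bMap (box A (Delta n)) X)
          (fun m n f g => bComp g (boxmap (sId A) (Dmap f))) _ _).
- by move=> n g; apply: bMap_eq => k j [a x] /=; rewrite hcomp_id_l.
- by move=> m n p f g h; apply: bMap_eq => k j [a x] /=; rewrite hcompA.
Defined.

Definition Under_map (A B : sSet) (u : sMap A B) (X : bsSet) :
  sMap (Under B X) (Under A X) :=
  @SMap (Under B X) (Under A X)
    (fun n g => bComp g (boxmap u (sId (Delta n))))
    (fun m n f g => ltac:(by apply: bMap_eq => k j [a x])).

Definition vfibrant (X : bsSet) : Prop :=
  forall m, kan_fibration (Under_map (bdry_incl m) X).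

Definition row (X : bsSet) (n : nat) : sSet.
Proof.
refine (@SSet (fun m => X m n) (fun m m' f x => bact f (hid n) x) _ _).
- by move=> m x; rewrite bact_id.
- by move=> m m' m'' f g x; rewrite -bact_comp hcomp_id_l.
Defined.

Definition rowmap (X Y : bsSet) (f : bMap X Y) (n : nat) : sMap (row X n) (row Y n) :=
  @SMap (row X n) (row Y n) (fun m x => bfn f x)
    (fun _ _ g x => bfn_nat f g (hid n) x).

(* Main.v *)
Require Import Defs.
From Stdlib Require Import Relations FunctionalExtensionality ProofIrrelevance.
From mathcomp Require Import all_boot.
From Stdlib Require Import ClassicalEpsilon Classical.
Set Implicit Arguments.
Unset Strict Implicit.
Unset Printing Implicit Defensive.


Lemma hcompE m n p (g : hom n p) (f : hom m n) i :
  hfun (hcomp g f) i = hfun g (hfun f i).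
Proof. by rewrite mk_homE. Qed.

Lemma hidE n i : hfun (hid n) i = i.
Proof. by rewrite mk_homE. Qed.

Lemma hom0_eq k (f g : hom k 0) : f = g.
Proof. by apply: hom_eq => i; rewrite (ord1 (hfun f i)) (ord1 (hfun g i)). Qed.

Definition surj m k (s : hom m k) := forall i, exists x, hfun s x = i.

Lemma surjP m k (s : hom m k) : ~~ bdryb s -> surj s.
Proof.
rewrite /bdryb negbK => /forallP H i.
by case/existsP: (H i) => x /eqP <-; exists x.
Qed.

Lemma surj_bdry m k (s : hom m k) : surj s -> ~~ bdryb s.
Proof.
move=> H; rewrite /bdryb negbK; apply/forallP => i.
by case: (H i) => x <-; apply/existsP; exists x.
Qed.

Lemma section_at m k (s : hom m k) (i : 'I_m.+1) : surj s ->
  exists d : hom k m, (forall j, hfun s (hfun d j) = j) /\ hfun d (hfun s i) = i.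
Proof.
move=> Hs.
pose d0 (j : 'I_k.+1) : 'I_m.+1 :=
  if j == hfun s i then i else odflt i [pick x | hfun s x == j].
have Hd0 j : hfun s (d0 j) = j.
  rewrite /d0; case: eqP => [->//|_].
  case: pickP => [x /eqP //|H]; case: (Hs j) => x Hx.
  by move: (H x); rewrite Hx eqxx.
have Hm : forall a b : 'I_k.+1, a <= b -> d0 a <= d0 b.
  move=> a b Hab; rewrite leqNgt; apply/negP => Hlt.
  have := hom_mono s (ltnW Hlt); rewrite !Hd0 => Hba.
  have Eab : a = b by apply: val_inj; apply/eqP; rewrite eqn_leq Hab Hba.
  by subst b; rewrite ltnn in Hlt.
exists (mk_hom Hm); split => [j|]; rewrite mk_homE //.
by rewrite /d0 eqxx.
Qed.

Lemma bdry_factor j k (f : hom j k) : bdryb f ->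
  exists k1, k1 < k /\ exists (t : hom j k1) (u : hom k1 k), f = hcomp u t.
Proof.
rewrite /bdryb => /forallPn [v /existsPn Hv].
case: k f v Hv => [|k'] f v Hv.
  by move: (Hv ord0); rewrite (ord1 v) (ord1 (hfun f ord0)) eqxx.
have Hne x : v != hfun f x by rewrite eq_sym Hv.
pose t (x : 'I_j.+1) : 'I_k'.+1 := sval (unlift_some (Hne x)).
have Ht x : hfun f x = lift v (t x).
  by rewrite /t; case: (unlift_some (Hne x)) => y /= ->.
have Hm : forall a b : 'I_j.+1, a <= b -> t a <= t b.
  move=> a b Hab; have := hom_mono f Hab.
  by rewrite !Ht /= leq_bump2.
exists k'; split => //; exists (mk_hom Hm); exists (coface v).
by apply: hom_eq => x; rewrite !mk_homE Ht.
Qed.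

Lemma strict_endo_id k (d : hom k k) :
  (forall a b : 'I_k.+1, a < b -> hfun d a < hfun d b) -> forall i, hfun d i = i.
Proof.
move=> Hs.
have H1 : forall i : 'I_k.+1, i <= hfun d i.
  move=> [i Hi]; elim: i Hi => [|i IH] Hi //=.
  have Hi' : i < k.+1 by apply: ltnW.
  have := IH Hi'; have := Hs (Ordinal Hi') (Ordinal Hi) (ltnSn i) => /= h1 h2.
  exact: leq_ltn_trans h2 h1.
have H2 : forall c (i : 'I_k.+1), i + c = k -> hfun d i <= i.
  elim=> [|c IH] i Hic.
    by rewrite addn0 in Hic; rewrite Hic -ltnS.
  have h0 : (i + c).+1 <= k by rewrite -addnS Hic.
  have Hi1 : i.+1 < k.+1 by rewrite ltnS (leq_trans _ h0) // ltnS leq_addr.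
  have := IH (Ordinal Hi1); rewrite /= addSnnS => /(_ Hic) h.
  have := Hs i (Ordinal Hi1) (ltnSn i) => h'.
  by rewrite -ltnS; exact: leq_trans h' h.
move=> i; apply: val_inj; apply/eqP; rewrite eqn_leq H1 andbT.
apply: (H2 (k - i)); rewrite subnKC //; rewrite -ltnS; exact: ltn_ord.
Qed.

Lemma surj_endo_id k (t : hom k k) : surj t -> t = hid k.
Proof.
move=> Hs; have [d [Hd _]] := section_at ord0 Hs.
have Hst : forall a b : 'I_k.+1, a < b -> hfun d a < hfun d b.
  move=> a b Hab; rewrite ltn_neqAle; apply/andP; split.
    apply/negP => /eqP E; have E' : hfun d a = hfun d b by apply: val_inj.
    by move: (congr1 (hfun t) E'); rewrite !Hd => Eab; rewrite Eab ltnn in Hab.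
  exact: hom_mono (ltnW Hab).
have Hid := strict_endo_id Hst.
apply: hom_eq => i; rewrite hidE.
by rewrite -{1}(Hid i) Hd.
Qed.


Definition nondeg (K : sSet) k (y : K k) :=
  forall k' (t : hom k k') (z : K k'), k' < k -> act t z <> y.

Lemma nondeg_le (K : sSet) k (y : K k) k' (t : hom k k') (z : K k') :
  nondeg y -> act t z = y -> k <= k'.
Proof. by move=> Hn E; rewrite leqNgt; apply/negP => H; exact: (Hn _ _ _ H E). Qed.

Lemma nondeg_bdry (K : sSet) k (y : K k) k' (t : hom k k') (z : K k') :
  nondeg y -> act t z = y -> bdryb t -> k < k'.
Proof.
move=> Hn E /bdry_factor [k1 [Hk1 [t1 [u Et]]]].
subst t; rewrite act_comp in E.
exact: leq_ltn_trans (nondeg_le Hn E) Hk1.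
Qed.

Lemma ez_exists (K : sSet) k (z : K k) m (t : hom m k) :
  exists k' (s : hom m k') (y : K k'),
    [/\ k' <= k, surj s, nondeg y & act s y = act t z].
Proof.
elim/ltn_ind: k z m t => k IH z m t.
case Hb: (bdryb t).
  have [k1 [Hk1 [t1 [u Et]]]] := bdry_factor Hb.
  have [k' [s [y [H1 H2 H3 H4]]]] := IH k1 Hk1 (act u z) m t1.
  exists k', s, y; split => //; first exact: leq_trans H1 (ltnW Hk1).
  by rewrite H4 Et act_comp.
have Hs : surj t by apply: surjP; rewrite Hb.
case: (classic (nondeg z)) => Hn.
  by exists k, t, z.
have [k'' [t' [z' [Hk E]]]] : exists k'' (t' : hom k k'') (z' : K k''), k'' < k /\ act t' z' = z.
  apply: NNPP => HH; apply: Hn => k'' t' z' Hk E; apply: HH.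
  by exists k'', t', z'.
have [k' [s [y [H1 H2 H3 H4]]]] := IH k'' Hk z' m (hcomp t' t).
exists k', s, y; split => //; first exact: leq_trans H1 (ltnW Hk).
by rewrite H4 act_comp E.
Qed.

Lemma sect_comp m k (s : hom m k) (d : hom k m) :
  (forall j, hfun s (hfun d j) = j) -> hcomp s d = hid k.
Proof. by move=> H; apply: hom_eq => j; rewrite mk_homE hidE H. Qed.

Lemma ez_dim (K : sSet) m k k' (s : hom m k) (s' : hom m k') (y : K k) (y' : K k') :
  surj s -> surj s' -> nondeg y -> nondeg y' -> act s y = act s' y' -> k = k'.
Proof.
move=> Hs Hs' Hy Hy' E.
have [d [Hd _]] := section_at ord0 Hs.
have [d' [Hd' _]] := section_at ord0 Hs'.
have E1 : act (hcomp s' d) y' = y.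
  by rewrite act_comp -E -act_comp sect_comp // act_id.
have E2 : act (hcomp s d') y = y'.
  by rewrite act_comp E -act_comp sect_comp // act_id.
apply/eqP; rewrite eqn_leq (nondeg_le Hy E1) (nondeg_le Hy' E2) //.
Qed.

Lemma ez_same (K : sSet) m k (s s' : hom m k) (y y' : K k) :
  surj s -> surj s' -> nondeg y -> nondeg y' -> act s y = act s' y' -> y = y' /\ s = s'.
Proof.
move=> Hs Hs' Hy Hy' E.
have endo_id : forall (t : hom k k) (w : K k), act t w = y -> t = hid k.
  move=> t w Ew; apply: surj_endo_id; apply: surjP; apply/negP => Hb.
  by have := nondeg_bdry Hy Ew Hb; rewrite ltnn.
have [d [Hd _]] := section_at ord0 Hs.
have E1 : act (hcomp s' d) y' = y.
  by rewrite act_comp -E -act_comp sect_comp // act_id.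
have Eyy : y = y' by rewrite -E1 (endo_id _ _ E1) act_id.
subst y'; split => //.
apply: hom_eq => i.
have [d' [Hd' Hd'i]] := section_at i Hs'.
have E2 : act (hcomp s d') y = y.
  by rewrite act_comp E -act_comp sect_comp // act_id.
have := endo_id _ _ E2 => /(congr1 (fun t => hfun t (hfun s' i))).
by rewrite mk_homE hidE Hd'i.
Qed.


Definition trivfib (E B : sSet) (p : sMap E B) : Prop :=
  forall m (a : sMap (Bdry m) E) (b : sMap (Delta m) B),
    (forall j (x : Bdry m j), fn p (fn a x) = fn b (fn (bdry_incl m) x)) ->
    exists l : sMap (Delta m) E,
      (forall j (x : Bdry m j), fn l (fn (bdry_incl m) x) = fn a x) /\
      (forall j (x : Delta m j), fn p (fn l x) = fn b x).

Definition yon (S : sSet) k (s : S k) : sMap (Delta k) S :=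
  @SMap (Delta k) S (fun j f => act f s) (fun j j' f g => act_comp f g s).

Lemma lt_bdry k1 k (u : hom k1 k) : k1 < k -> bdryb u.
Proof.
move=> Hk; case Hb: (bdryb u) => //.
have Hs : surj u by apply: surjP; rewrite Hb.
have [d [Hd _]] := section_at ord0 Hs.
have Hinj : injective (hfun d).
  by move=> a b E; rewrite -(Hd a) -(Hd b) E.
have := leq_card _ Hinj; rewrite !card_ord ltnS => H.
by have := leq_ltn_trans H Hk; rewrite ltnn.
Qed.

Section Skel.
Variables (K E B : sSet) (p : sMap E B) (PL : forall m, K m -> Prop).
Hypothesis PLs : forall m m' (f : hom m' m) x, PL x -> PL (act f x).
Variable a : forall m (x : K m), PL x -> E m.
Arguments a {m} x _.
Hypothesis anat : forall m m' (f : hom m' m) x h h', a (act f x) h' = act f (a x h).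
Variable b : sMap K B.
Hypothesis ab : forall m (x : K m) h, fn p (a x h) = fn b x.
Hypothesis tp : trivfib p.

Definition Sk r m (x : K m) := exists k (t : hom m k) (z : K k), k < r /\ act t z = x.
Definition D r m (x : K m) := Sk r x \/ PL x.

Lemma D_act r m m' (f : hom m' m) x : D r x -> D r (act f x).
Proof.
case=> [[k [t [z [Hk E0]]]]|H]; last by right; apply: PLs.
by left; exists k, (hcomp t f), z; rewrite act_comp E0.
Qed.

Record PLift r := {
  pl : forall m (x : K m), D r x -> E m;
  pl_nat : forall m m' (f : hom m' m) (x : K m) (h : D r x) (h' : D r (act f x)),
     pl h' = act f (pl h);
  pl_over : forall m (x : K m) (h : D r x), fn p (pl h) = fn b x;
  pl_ext : forall m (x : K m) (h : PL x) (h' : D r x), pl h' = a x h }.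

Lemma pl_eq r (P : PLift r) m (x x' : K m) (h : D r x) (h' : D r x') : x = x' -> pl P h = pl P h'.
Proof. by move=> E0; subst x'; rewrite (proof_irrelevance _ h h'). Qed.

Lemma D0_PL m (x : K m) : D 0 x -> PL x.
Proof. by case=> // [[k [t [z [Hk _]]]]]. Qed.

Definition base : PLift 0.
Proof.
refine (@Build_PLift 0 (fun m x h => a x (D0_PL h)) _ _ _).
- by move=> m m' f x h h'; apply: anat.
- by move=> m x h; apply: ab.
- by move=> m x h h'; rewrite (proof_irrelevance _ (D0_PL h') h).
Defined.

Lemma bd_D r k (y : K k) j (f : hom j k) : bdryb f -> k <= r -> D r (act f y).
Proof.
move=> /bdry_factor [k1 [Hk1 [t1 [u Ef]]]] Hk; left.
exists k1, t1, (act u y); split; first exact: leq_trans Hk1 Hk.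
by rewrite Ef act_comp.
Qed.

Section StepS.
Variables (r : nat) (P : PLift r).

Definition bdmap k (y : K k) (hk : k <= r) : sMap (Bdry k) E.
Proof.
refine (@SMap (Bdry k) E (fun j f => pl P (bd_D y (svalP f) hk)) _).
move=> j j' f [g Hg] /=; rewrite -(pl_nat P _ (D_act f _)).
  exact (bd_D y Hg hk).
by move=> H0; apply: pl_eq; rewrite act_comp.
Defined.

Lemma bdmap_ok k (y : K k) (hk : k <= r) j (x : Bdry k j) :
  fn p (fn (bdmap y hk) x) = fn (yon (fn b y)) (fn (bdry_incl k) x).
Proof. by rewrite /= pl_over fn_nat. Qed.

Definition cfill k (y : K k) (hk : k <= r) : E k :=
  fn (proj1_sig (constructive_indefinite_description _ (tp (bdmap_ok y hk)))) (hid k).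

Lemma cfill_bd k (y : K k) (hk : k <= r) j (f : hom j k) (hf : bdryb f) :
  act f (cfill y hk) = pl P (bd_D y hf hk).
Proof.
rewrite /cfill; case: constructive_indefinite_description => l [H1 H2] /=.
rewrite -fn_nat /= hcomp_id_l.
by move: (H1 j (exist _ f hf)) => /= ->; apply: pl_eq.
Qed.

Lemma cfill_over k (y : K k) (hk : k <= r) : fn p (cfill y hk) = fn b y.
Proof.
rewrite /cfill; case: constructive_indefinite_description => l [H1 H2] /=.
by rewrite H2 /= act_id.
Qed.

Lemma cfill_irr k (y : K k) (hk hk' : k <= r) : cfill y hk = cfill y hk'.
Proof. by rewrite (proof_irrelevance _ hk hk'). Qed.

Lemma ez_x m (x : K m) : {e : {k : nat & (hom m k * K k)%type} |
   surj (projT2 e).1 /\ nondeg (projT2 e).2 /\ act (projT2 e).1 (projT2 e).2 = x}.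
Proof.
apply: constructive_indefinite_description.
have [k [s [y [_ H1 H2 H3]]]] := ez_exists x (hid m).
by exists (existT _ k (s, y)); rewrite /= H3 act_id.
Qed.

Lemma hk_lemma m (x : K m) k (s : hom m k) (y : K k) :
  surj s -> nondeg y -> act s y = x -> D r.+1 x -> ~ D r x -> k <= r.
Proof.
move=> Hs Hy E0 Hx Hn.
case: Hx => [[k0 [t [z [Hk0 Ez]]]]|HL]; last by case: Hn; right.
have [k2 [s2 [y2 [H1 H2 H3 H4]]]] := ez_exists z t.
have := ez_dim Hs H2 Hy H3; rewrite E0 H4 Ez => /(_ erefl) ->.
exact: leq_trans H1 Hk0.
Qed.

Definition pl' m (x : K m) (h : D r.+1 x) : E m :=
  match excluded_middle_informative (D r x) with
  | left h0 => pl P h0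
  | right hn =>
      let e := proj1_sig (ez_x x) in
      act (projT2 e).1
        (cfill (projT2 e).2
           (hk_lemma (proj1 (proj2_sig (ez_x x))) (proj1 (proj2 (proj2_sig (ez_x x))))
                     (proj2 (proj2 (proj2_sig (ez_x x)))) h hn))
  end.

Lemma pl'_left m (x : K m) (h : D r.+1 x) (h0 : D r x) : pl' h = pl P h0.
Proof.
rewrite /pl'; case: excluded_middle_informative => // h1.
by rewrite (proof_irrelevance _ h1 h0).
Qed.

Lemma pl'_right m (x : K m) (h : D r.+1 x) k (s : hom m k) (y : K k) (hk : k <= r) :
  ~ D r x -> surj s -> nondeg y -> act s y = x -> pl' h = act s (cfill y hk).
Proof.
move=> Hn Hs Hy E0; rewrite /pl'; case: excluded_middle_informative => // hn.
move: (hk_lemma _ _ _ _ _).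
case: (ez_x x) => [[k0 [s0 y0]] [H1 [H2 H3]]] /= hk0.
have ek := ez_dim H1 Hs H2 Hy; rewrite H3 E0 in ek; have {}ek := ek erefl.
simpl in ek, H1, H2, H3; subst k0.
have [ey es] := ez_same H1 Hs H2 Hy (etrans H3 (esym E0)).
subst y0 s0.
by rewrite (cfill_irr y hk0 hk).
Qed.

Lemma not_D_dim m (x : K m) k (s : hom m k) (y : K k) :
  ~ D r x -> act s y = x -> r <= k.
Proof.
move=> Hn E0; rewrite leqNgt; apply/negP => Hk; apply: Hn; left.
by exists k, s, y.
Qed.

Definition step : PLift r.+1.
Proof.
refine (@Build_PLift r.+1 pl' _ _ _).
- move=> m m' f x h h'.
  case: (classic (D r x)) => Hx.
    by rewrite (pl'_left h Hx) (pl'_left h' (D_act f Hx)) (pl_nat P).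
  have [k [s [y [_ Hs Hy Ey]]]] := ez_exists x (hid m); rewrite act_id in Ey.
  have hk := hk_lemma Hs Hy Ey h Hx.
  have Hrk := not_D_dim Hx Ey.
  rewrite (pl'_right h hk Hx Hs Hy Ey).
  have Efx : act (hcomp s f) y = act f x by rewrite act_comp Ey.
  case Hb: (bdryb (hcomp s f)).
    have [k1 [Hk1 [t1 [u Eu]]]] := bdry_factor Hb.
    have HD : D r (act f x).
      left; exists k1, t1, (act u y); split; first exact: leq_trans Hk1 hk.
      by rewrite -Efx Eu act_comp.
    rewrite (pl'_left h' HD) -act_comp Eu act_comp.
    rewrite (@cfill_bd _ y hk _ u (lt_bdry u Hk1)) -(pl_nat P).
      exact: (D_act t1 (bd_D y (lt_bdry u Hk1) hk)).
    by move=> H0; apply: pl_eq; rewrite -act_comp -Eu Efx.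
  have Hsf : surj (hcomp s f) by apply: surjP; rewrite Hb.
  have HnD : ~ D r (act f x).
    case=> [[k0 [t [z [Hk0 Ez]]]]|HL].
      have [k2 [s2 [y2 [H1 H2 H3 H4]]]] := ez_exists z t.
      have := ez_dim Hsf H2 Hy H3; rewrite H4 Ez Efx => /(_ erefl) ek.
      subst k2.
      by have := leq_ltn_trans (leq_trans Hrk H1) Hk0; rewrite ltnn.
    have [d [Hd _]] := section_at ord0 Hsf.
    apply: Hx; right; rewrite -Ey; apply: PLs.
    have -> : y = act d (act f x).
      by rewrite -Efx -act_comp sect_comp // act_id.
    by apply: PLs.
  by rewrite (pl'_right h' hk HnD Hsf Hy Efx) act_comp.
- move=> m x h.
  case: (classic (D r x)) => Hx; first by rewrite (pl'_left h Hx) pl_over.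
  have [k [s [y [_ Hs Hy Ey]]]] := ez_exists x (hid m); rewrite act_id in Ey.
  have hk := hk_lemma Hs Hy Ey h Hx.
  by rewrite (pl'_right h hk Hx Hs Hy Ey) fn_nat cfill_over -fn_nat Ey.
- move=> m x hL h.
  by rewrite (pl'_left h (or_intror hL)) (pl_ext P).
Defined.

Lemma step_ext m (x : K m) (h : D r.+1 x) (h0 : D r x) : pl step h = pl P h0.
Proof. exact: pl'_left. Qed.

End StepS.

Fixpoint stage r : PLift r :=
  match r with 0 => base | r'.+1 => step (stage r') end.

Lemma D_mono r s m (x : K m) : r <= s -> D r x -> D s x.
Proof.
move=> Hrs [[k [t [z [Hk E0]]]]|H]; last by right.
by left; exists k, t, z; split => //; exact: leq_trans Hk Hrs.
Qed.

Lemma stage_ext r s m (x : K m) (h : D s x) (h' : D r x) : r <= s -> pl (stage s) h = pl (stage r) h'.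
Proof.
move=> Hrs; elim: s Hrs h => [|s IH] Hrs h.
  by move: Hrs; rewrite leqn0 => /eqP E0; subst r; apply: pl_eq.
case: (leqP r s) => Hr.
  by simpl; rewrite (pl'_left (stage s) h (D_mono Hr h')) IH.
have Es : r = s.+1 by apply/eqP; rewrite eqn_leq Hrs Hr.
subst r; exact: pl_eq.
Qed.

Lemma D_self m (x : K m) : D m.+1 x.
Proof. by left; exists m, (hid m), x; rewrite act_id. Qed.

Definition final_fn m (x : K m) : E m := pl (stage m.+1) (D_self x).

Lemma final_nat m m' (f : hom m' m) (x : K m) : final_fn (act f x) = act f (final_fn x).
Proof.
rewrite /final_fn.
have L1 : m'.+1 <= (m + m').+1 by rewrite ltnS leq_addl.
have L2 : m.+1 <= (m + m').+1 by rewrite ltnS leq_addr.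
have H1 := D_mono L1 (D_self (act f x)).
have H2 := D_mono L2 (D_self x).
rewrite -(stage_ext H1 (D_self (act f x)) L1) (pl_nat _ H2).
by rewrite (stage_ext H2 (D_self x) L2).
Qed.

Lemma skel_lift : exists l : sMap K E,
  (forall m x h, fn l x = a (m:=m) x h) /\ (forall m x, fn p (fn l x) = fn b (n:=m) x).
Proof.
exists (@SMap K E final_fn (fun m n f x => final_nat f x)); split => m x.
- by move=> h; rewrite /= /final_fn pl_ext.
- by rewrite /= /final_fn pl_over.
Qed.

End Skel.


Lemma enum_sorted n (S : {set 'I_n.+1}) :
  sorted (fun a b : 'I_n.+1 => a < b) (enum S).
Proof.
rewrite /enum_mem -enumT; apply: sorted_filter.
  by move=> a b c; apply: ltn_trans.
have := iota_ltn_sorted 0 n.+1; rewrite -val_enum_ord sorted_map.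
by [].
Qed.

Section FS.
Variables (n r : nat) (T : {set 'I_n.+1}).

Definition Ff (i : 'I_r.+2) : 'I_n.+1 :=
  if #|T| == r.+2 then nth ord0 (enum T) i else ord0.

Lemma Ff_strict : #|T| = r.+2 -> forall i j : 'I_r.+2, i < j -> Ff i < Ff j.
Proof.
move=> hT i j Hij; rewrite /Ff hT eqxx.
have := @sorted_ltn_nth _ (fun a b : 'I_n.+1 => a < b) _ ord0 (enum T) (enum_sorted T).
apply => //; first by move=> a b c; apply: ltn_trans.
  by rewrite inE /= -cardE hT ltn_ord.
by rewrite inE /= -cardE hT ltn_ord.
Qed.

Lemma Ff_mono : forall i j : 'I_r.+2, i <= j -> Ff i <= Ff j.
Proof.
move=> i j Hij; case: (eqVneq #|T| r.+2) => hT.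
  rewrite leq_eqVlt in Hij; case/orP: Hij => [/eqP E|H].
    by have -> : i = j by apply: val_inj.
  exact: ltnW (Ff_strict hT H).
by rewrite /Ff (negbTE hT).
Qed.

Definition FT : hom r.+1 n := mk_hom Ff_mono.

Lemma FT_in : #|T| = r.+2 -> forall i, hfun FT i \in T.
Proof.
move=> hT i; rewrite mk_homE /Ff hT eqxx; rewrite -mem_enum; apply: mem_nth.
by rewrite -cardE hT ltn_ord.
Qed.

Lemma FT_inj : #|T| = r.+2 -> injective (hfun FT).
Proof.
move=> hT i j; rewrite !mk_homE => E.
apply: val_inj; apply/eqP; rewrite eqn_leq; apply/andP; split; rewrite leqNgt; apply/negP => H.
  by have := Ff_strict hT H; rewrite E ltnn.
by have := Ff_strict hT H; rewrite E ltnn.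
Qed.



Lemma FT_onto : #|T| = r.+2 -> forall t, t \in T -> exists i, hfun FT i = t.
Proof.
move=> hT t Ht.
have Hi : index t (enum T) < r.+2 by rewrite -hT cardE index_mem mem_enum.
exists (Ordinal Hi); rewrite mk_homE /Ff hT eqxx /=.
by rewrite nth_index // mem_enum.
Qed.

Lemma FT_0 : #|T| = r.+2 -> ord0 \in T -> hfun FT ord0 = ord0.
Proof.
move=> hT H0; have [i Hi] := FT_onto hT H0.
apply: val_inj; apply/eqP; rewrite -leqn0 /=.
by rewrite -[X in _ <= X]/(nat_of_ord (@ord0 n)) -Hi; apply: hom_mono.
Qed.

Lemma FT_refl : #|T| = r.+2 -> forall i j, hfun FT i <= hfun FT j -> i <= j.
Proof.
move=> hT i j H; rewrite leqNgt; apply/negP => Hlt.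
have := Ff_strict hT Hlt; rewrite -!(mk_homE Ff_mono) => H'.
by have := leq_trans H' H; rewrite ltnn.
Qed.

Section G.
Variables (j : nat) (phi : hom j n).
Hypothesis hT : #|T| = r.+2.
Hypothesis hphi : forall i, hfun phi i \in T.

Definition Gf (i : 'I_j.+1) : 'I_r.+2 := proj1_sig (constructive_indefinite_description _ (FT_onto hT (hphi i))).

Lemma Gf_spec i : hfun FT (Gf i) = hfun phi i.
Proof. by rewrite /Gf; case: constructive_indefinite_description. Qed.

Lemma Gf_mono : forall a b : 'I_j.+1, a <= b -> Gf a <= Gf b.
Proof. by move=> a b H; apply: (FT_refl hT); rewrite !Gf_spec; apply: hom_mono. Qed.

Definition GT : hom j r.+1 := mk_hom Gf_mono.

Lemma FG : hcomp FT GT = phi.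
Proof. by apply: hom_eq => i; rewrite mk_homE /GT mk_homE Gf_spec. Qed.
End G.
End FS.


Definition v0 n : hom 0 n := @mk_hom 0 n (fun _ => ord0) (fun _ _ _ => leqnn 0).

Definition Sset n j (phi : hom j n) : {set 'I_n.+1} :=
  ord0 |: [set hfun phi i | i : 'I_j.+1].

Definition Cr r n j (phi : hom j n) : bool := #|Sset phi| <= r.+1.

Lemma S0 n j (phi : hom j n) : ord0 \in Sset phi.
Proof. by rewrite !inE eqxx. Qed.

Lemma S_in n j (phi : hom j n) i : hfun phi i \in Sset phi.
Proof. by rewrite !inE; apply/orP; right; apply/imsetP; exists i. Qed.

Lemma S_comp n j j' (phi : hom j n) (psi : hom j' j) : Sset (hcomp phi psi) \subset Sset phi.
Proof.
apply/subsetP => t; rewrite !inE => /orP [->//|/imsetP [i _ ->]].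
by rewrite mk_homE; apply/orP; right; apply/imsetP; exists (hfun psi i).
Qed.

Lemma C_comp r n j j' (phi : hom j n) (psi : hom j' j) : Cr r phi -> Cr r (hcomp phi psi).
Proof. by rewrite /Cr => H; apply: leq_trans H; apply: subset_leq_card; apply: S_comp. Qed.

Lemma C_le r s n j (phi : hom j n) : r <= s -> Cr r phi -> Cr s phi.
Proof. by rewrite /Cr => H H'; apply: leq_trans H' _; rewrite ltnS. Qed.

Lemma C0_const n j (phi : hom j n) : Cr 0 phi -> forall i, hfun phi i = ord0.
Proof.
rewrite /Cr => H i; case: (eqVneq (hfun phi i) ord0) => // Hne.
have : [set ord0; hfun phi i] \subset Sset phi.
  by apply/subsetP => t /set2P [->|->]; [exact: S0 | exact: S_in].
move/subset_leq_card; rewrite cards2 eq_sym Hne => H2.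
by have := leq_trans H2 H.
Qed.

Lemma C_all n j (phi : hom j n) : Cr n phi.
Proof. by rewrite /Cr; apply: leq_trans (max_card _) _; rewrite card_ord. Qed.

Lemma C_v0 r n : Cr r (v0 n).
Proof.
rewrite /Cr; apply: leq_trans (_ : #|[set (@ord0 n)]| <= r.+1); last by rewrite cards1.
apply: subset_leq_card; apply/subsetP => t; rewrite !inE => /orP [//|/imsetP [i _ ->]].
by rewrite mk_homE.
Qed.

Lemma C_card r n j (phi : hom j n) : Cr r.+1 phi -> ~ Cr r phi -> #|Sset phi| = r.+2.
Proof.
rewrite /Cr => H1 H2; apply/eqP; rewrite eqn_leq H1 /=.
by rewrite ltnNge; apply/negP.
Qed.

Section Vert.
Variables (E B : sSet) (q : sMap E B).
Hypothesis Hq : kan_fibration q.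
Variables (n : nat) (b : sMap (Delta n) B) (e : E 0).
Hypothesis He : fn q e = fn b (v0 n).

Record VL r := {
  vl : forall j (phi : hom j n), Cr r phi -> E j;
  vl_nat : forall j j' (psi : hom j' j) (phi : hom j n) (h : Cr r phi) (h' : Cr r (hcomp phi psi)),
     vl h' = act psi (vl h);
  vl_over : forall j (phi : hom j n) (h : Cr r phi), fn q (vl h) = fn b phi;
  vl_v0 : forall h : Cr r (v0 n), vl h = e }.

Lemma vl_eq r (P : VL r) j (phi phi' : hom j n) (h : Cr r phi) (h' : Cr r phi') :
  phi = phi' -> vl P h = vl P h'.
Proof. by move=> E0; subst phi'; rewrite (proof_irrelevance _ h h'). Qed.

Definition vbase : VL 0.
Proof.
refine (@Build_VL 0 (fun j phi h => act (hconst j) e) _ _ _).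
- by move=> j j' psi phi h h'; rewrite -act_comp (hom0_eq (hconst j') (hcomp (hconst j) psi)).
- move=> j phi h; rewrite fn_nat He -fn_nat /=; congr (fn b _).
  by apply: hom_eq => i; rewrite mk_homE mk_homE (C0_const h).
- by move=> h; rewrite (hom0_eq (hconst 0) (hid 0)) act_id.
Defined.

Section VStep.
Variables (r : nat) (P : VL r).

Lemma hornC (T : {set 'I_n.+1}) (hT : #|T| = r.+2) (h0 : ord0 \in T) j (g : hom j r.+1) :
  hornb ord0 g -> Cr r (hcomp (FT r T) g).
Proof.
case/existsP => i /andP [Hi0 /forallP Hg].
have FiT := FT_in hT i.
have Hsub : Sset (hcomp (FT r T) g) \subset T :\ hfun (FT r T) i.
  apply/subsetP => t; rewrite !inE => /orP [/eqP ->|/imsetP [x _ ->]].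
    rewrite h0 andbT; apply/negP => /eqP E0.
    have := FT_0 hT h0; rewrite E0 => /(FT_inj hT) E1.
    by rewrite E1 eqxx in Hi0.
  rewrite mk_homE FT_in // andbT; apply/negP => /eqP /(FT_inj hT) E1.
  by move: (Hg x); rewrite E1 eqxx.
rewrite /Cr; apply: leq_trans (subset_leq_card Hsub) _.
by move: hT; rewrite (cardsD1 (hfun (FT r T) i)) FiT add1n => [[->]].
Qed.

Definition hornmap (T : {set 'I_n.+1}) (hT : #|T| = r.+2) (h0 : ord0 \in T) :
  sMap (Horn (@ord0 r.+1)) E.
Proof.
refine (@SMap (Horn (@ord0 r.+1)) E (fun j g => vl P (hornC hT h0 (svalP g))) _).
move=> j j' f [g Hg] /=; rewrite -(vl_nat P _ (C_comp f _)).
  exact: (hornC hT h0 Hg).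
by move=> H0; apply: vl_eq; apply: hom_eq => x; rewrite !mk_homE.
Defined.

Definition bmapT (T : {set 'I_n.+1}) : sMap (Delta r.+1) B := sComp b (Dmap (FT r T)).

Lemma hornmap_ok (T : {set 'I_n.+1}) (hT : #|T| = r.+2) (h0 : ord0 \in T) j (x : Horn (@ord0 r.+1) j) :
  fn q (fn (hornmap hT h0) x) = fn (bmapT T) (fn (horn_incl (@ord0 r.+1)) x).
Proof. by rewrite /= vl_over. Qed.

Definition cT (T : {set 'I_n.+1}) (hT : #|T| = r.+2) (h0 : ord0 \in T) : sMap (Delta r.+1) E :=
  proj1_sig (constructive_indefinite_description _ (Hq (hornmap_ok hT h0))).

Lemma cT_horn (T : {set 'I_n.+1}) (hT : #|T| = r.+2) (h0 : ord0 \in T) j (g : hom j r.+1) (hg : hornb ord0 g) :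
  fn (cT hT h0) g = vl P (hornC hT h0 hg).
Proof.
rewrite /cT; case: constructive_indefinite_description => l [H1 H2] /=.
by move: (H1 j (exist _ g hg)) => /= ->; apply: vl_eq.
Qed.

Lemma cT_over (T : {set 'I_n.+1}) (hT : #|T| = r.+2) (h0 : ord0 \in T) j (g : hom j r.+1) :
  fn q (fn (cT hT h0) g) = fn b (hcomp (FT r T) g).
Proof.
rewrite /cT; case: constructive_indefinite_description => l [H1 H2] /=.
by rewrite H2.
Qed.

Definition vl' j (phi : hom j n) (h : Cr r.+1 phi) : E j :=
  match excluded_middle_informative (Cr r phi) with
  | left h0 => vl P h0
  | right hn => fn (cT (C_card h hn) (S0 phi)) (GT (C_card h hn) (@S_in n j phi))
  end.

Lemma vl'_left j (phi : hom j n) (h : Cr r.+1 phi) (h0 : Cr r phi) : vl' h = vl P h0.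
Proof.
rewrite /vl'; case: excluded_middle_informative => // h1.
by rewrite (proof_irrelevance _ h1 h0).
Qed.

Lemma vl'_right j (phi : hom j n) (h : Cr r.+1 phi) (T : {set 'I_n.+1}) (hT : #|T| = r.+2) (h0 : ord0 \in T)
  (hphi : forall i, hfun phi i \in T) :
  ~ Cr r phi -> Sset phi = T -> vl' h = fn (cT hT h0) (GT hT hphi).
Proof.
move=> Hn ET; rewrite /vl'; case: excluded_middle_informative => // hn.
subst T.
rewrite (proof_irrelevance _ (C_card h hn) hT) (proof_irrelevance _ (S0 phi) h0).
by rewrite (proof_irrelevance _ (@S_in n j phi) hphi).
Qed.

Definition vstep : VL r.+1.
Proof.
refine (@Build_VL r.+1 vl' _ _ _).
- move=> j j' psi phi h h'.
  case: (boolP (Cr r phi)) => Hc.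
    by rewrite (vl'_left h Hc) (vl'_left h' (C_comp psi Hc)) (vl_nat P).
  have Hn : ~ Cr r phi by apply/negP.
  have hT := C_card h Hn.
  rewrite (vl'_right h hT (S0 phi) (@S_in n j phi) Hn erefl).
  rewrite -fn_nat /=.
  set G := GT hT (@S_in n j phi).
  have FGe : hcomp (FT r (Sset phi)) G = phi by apply: FG.
  have FGp : forall y, hfun (FT r (Sset phi)) (hfun G y) = hfun phi y.
    by move=> y; rewrite -hcompE FGe.
  case: (boolP (Cr r (hcomp phi psi))) => Hc'.
    rewrite (vl'_left h' Hc').
    have Hhorn : hornb ord0 (hcomp G psi).
      have : ~~ (Sset phi \subset Sset (hcomp phi psi)).
        apply/negP => Hs; have := subset_leq_card Hs; rewrite hT => H2.
        by have := leq_trans H2 Hc'; rewrite ltnn.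
      case/subsetPn => t Ht Htn.
      have [i Hi] := FT_onto hT Ht.
      apply/existsP; exists i; apply/andP; split.
        apply/negP => /eqP Ei; subst i.
        by move: Htn; rewrite -Hi FT_0 // S0.
      apply/forallP => x; apply/negP => /eqP Ex.
      move: Htn; rewrite -Hi -Ex.
      have -> : hfun (FT r (Sset phi)) (hfun (hcomp G psi) x) = hfun (hcomp phi psi) x.
        by rewrite !hcompE FGp.
      by rewrite S_in.
    rewrite (cT_horn hT (S0 phi) Hhorn); apply: vl_eq.
    by rewrite hcompA FGe.
  have Hn' : ~ Cr r (hcomp phi psi) by apply/negP.
  have hT' := C_card h' Hn'.
  have ES : Sset (hcomp phi psi) = Sset phi.
    apply/eqP; rewrite eqEcard S_comp hT hT' /=; done.
  have hpp : forall i, hfun (hcomp phi psi) i \in Sset phi.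
    by move=> i; rewrite -ES S_in.
  rewrite (vl'_right h' hT (S0 phi) hpp Hn' ES); congr (fn _ _).
  apply: hom_eq => x; apply: (FT_inj hT).
  rewrite hcompE FGp.
  by rewrite -hcompE FG hcompE.
- move=> j phi h.
  case: (boolP (Cr r phi)) => Hc; first by rewrite (vl'_left h Hc) vl_over.
  have Hn : ~ Cr r phi by apply/negP.
  have hT := C_card h Hn.
  rewrite (vl'_right h hT (S0 phi) (@S_in n j phi) Hn erefl) cT_over.
  by rewrite FG.
- by move=> h; rewrite (vl'_left h (C_v0 r n)) vl_v0.
Defined.
End VStep.

Fixpoint vstage r : VL r := match r with 0 => vbase | r'.+1 => vstep (vstage r') end.

Lemma vertex_lift : exists y : sMap (Delta n) E,
  (forall j (phi : Delta n j), fn q (fn y phi) = fn b phi) /\ fn y (v0 n) = e.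
Proof.
pose yf j (phi : hom j n) := vl (vstage n) (C_all phi).
have yn : forall j j' (f : hom j j') (x : hom j' n), yf j (hcomp x f) = act f (yf j' x).
  by move=> j j' f x; rewrite /yf (vl_nat _ (C_all x)).
exists (@SMap (Delta n) E yf yn); split.
- by move=> j phi; rewrite /= /yf vl_over.
- by rewrite /= /yf vl_v0.
Qed.
End Vert.


Lemma bactC (X : bsSet) m m' m'' n n' n'' (f : hom m' m) (f' : hom m'' m')
  (g : hom n' n) (g' : hom n'' n') (x : X m n) :
  bact f' g' (bact f g x) = bact (hcomp f f') (hcomp g g') x.
Proof. by rewrite bact_comp. Qed.

Definition pX (X : bsSet) n : sMap (row X n) (row X 0).
Proof.
refine (@SMap (row X n) (row X 0) (fun m x => bact (hid m) (v0 n) x) _).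
by move=> m m' f x /=; rewrite !bactC !hcomp_id_l !hcomp_id_r.
Defined.

Section TF.
Variables (X : bsSet) (HX : vfibrant X) (n m : nat).
Variables (a : sMap (Bdry m) (row X n)) (b : sMap (Delta m) (row X 0)).
Hypothesis Hab : forall j (x : Bdry m j), fn (pX X n) (fn a x) = fn b (fn (bdry_incl m) x).

Definition bqf j (phi : hom j n) : bMap (box (Bdry m) (Delta j)) X.
Proof.
refine (@BMap (box (Bdry m) (Delta j)) X
          (fun k j' bp => bact (hid k) (hcomp phi bp.2) (fn a bp.1)) _).
move=> k k' j1 j1' f g [be ps] /=.
by rewrite fn_nat /= !bactC !hcomp_id_l !hcomp_id_r hcompA.
Defined.

Definition bq : sMap (Delta n) (Under (Bdry m) X).
Proof.
refine (@SMap (Delta n) (Under (Bdry m) X) bqf _).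
move=> j j' f phi; apply: bMap_eq => k j1 [be ps] /=.
by rewrite hcompA.
Defined.

Definition e0 : Under (Delta m) X 0.
Proof.
refine (@BMap (box (Delta m) (Delta 0)) X
          (fun k j' bp => bact (hid k) bp.2 (fn b bp.1)) _).
move=> k k' j1 j1' f g [ga ps] /=.
by rewrite fn_nat /= !bactC !hcomp_id_l !hcomp_id_r.
Defined.

Lemma He0 : fn (Under_map (bdry_incl m) X) e0 = fn bq (v0 n).
Proof.
apply: bMap_eq => k j1 [be ps] /=.
have := Hab be => /= <-.
by rewrite !bactC !hcomp_id_l.
Qed.

Lemma trivfib_step : exists l : sMap (Delta m) (row X n),
      (forall j (x : Bdry m j), fn l (fn (bdry_incl m) x) = fn a x) /\
      (forall j (x : Delta m j), fn (pX X n) (fn l x) = fn b x).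
Proof.
have [y [Hy1 Hy2]] := vertex_lift (@HX m) He0.
pose Y := fn y (hid n).
pose lf k (ga : hom k m) : X k n := bfn Y (ga, hid n).
have ln : forall k k' (f : hom k k') (ga : hom k' m), lf k (hcomp ga f) = bact f (hid n) (lf k' ga).
  move=> k k' f ga; rewrite /lf -bfn_nat /=.
  by rewrite hcomp_id_l.
exists (@SMap (Delta m) (row X n) lf ln); split.
- move=> j [be Hbe] /=; rewrite /lf.
  have := Hy1 n (hid n) => /(congr1 (fun G : bMap (box (Bdry m) (Delta n)) X => bfn G ((exist _ be Hbe : Bdry m j), hid n))) /= E1.
  by rewrite /Y E1 hcomp_id_l bact_id.
- move=> j ga /=; rewrite /lf -bfn_nat /= hcomp_id_l hcomp_id_r.
  have E1 : fn y (v0 n) = act (v0 n) Y by rewrite /Y -fn_nat /= hcomp_id_l.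
  have := congr1 (fun G : bMap (box (Delta m) (Delta 0)) X => bfn G ((ga : Delta m j), hid 0)) E1; rewrite Hy2 /= hcomp_id_r => <-.
  by rewrite bact_id.
Qed.
End TF.

Lemma trivfib_pX (X : bsSet) n : vfibrant X -> trivfib (pX X n).
Proof. by move=> HX m a b Hab; apply: trivfib_step. Qed.


Section Map.
Variables (S T : sSet) (F : sMap S T).

Lemma esrc_map e : esrc (fn F e) = fn F (esrc e).
Proof. by rewrite /esrc fn_nat. Qed.
Lemma etgt_map e : etgt (fn F e) = fn F (etgt e).
Proof. by rewrite /etgt fn_nat. Qed.
Lemma edeg_map v : edeg (fn F v) = fn F (edeg v).
Proof. by rewrite /edeg fn_nat. Qed.
Lemma tface_map i t : tface i (fn F t) = fn F (tface i t).
Proof. by rewrite /tface fn_nat. Qed.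

Lemma chain_map x p y : is_chain x p y -> is_chain (fn F x) (map (fn F) p) (fn F y).
Proof.
elim: p x => [|e p IH] x /=; first by move=> ->.
by case=> H1 H2; rewrite esrc_map H1; split => //; rewrite etgt_map; apply: IH.
Qed.

Lemma hstep_map p p' : hstep p p' -> hstep (map (fn F) p) (map (fn F) p').
Proof.
case=> [a b v|a b t]; rewrite !map_cat /=.
  by rewrite -edeg_map; apply: hstep_deg.
by rewrite -!tface_map; apply: hstep_tri.
Qed.

Lemma hequiv_map x y p p' : hequiv x y p p' ->
  hequiv (fn F x) (fn F y) (map (fn F) p) (map (fn F) p').
Proof.
elim=> [a b [H1 H2 H3]|a|a b _ IH|a b c _ IH1 _ IH2].
- by apply: rst_step; split; [apply: chain_map|apply: chain_map|apply: hstep_map].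
- exact: rst_refl.
- exact: rst_sym.
- exact: rst_trans IH1 IH2.
Qed.

Lemma tau1_iso_map x y : tau1_iso x y -> tau1_iso (fn F x) (fn F y).
Proof.
case=> p [q [H1 H2 H3 H4]].
exists (map (fn F) p), (map (fn F) q); split; try exact: chain_map.
  by rewrite -map_cat; apply: (hequiv_map H3).
by rewrite -map_cat; apply: (hequiv_map H4).
Qed.
End Map.

Section Tau.
Variable S : sSet.

Lemma chain_cat (x y z : S 0) p q : is_chain x p y -> is_chain y q z -> is_chain x (p ++ q) z.
Proof.
elim: p x => [|e p IH] x /=; first by move=> -> .
by case=> H1 H2 H3; split => //; apply: IH.
Qed.

Lemma hstep_ctx (p q r r' : seq (S 1)) : hstep r r' -> hstep (p ++ r ++ q) (p ++ r' ++ q).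
Proof.
case=> [a b v|a b t].
  have -> : p ++ (a ++ edeg v :: b) ++ q = (p ++ a) ++ edeg v :: (b ++ q) by rewrite -!catA.
  have -> : p ++ (a ++ b) ++ q = (p ++ a) ++ (b ++ q) by rewrite -!catA.
  exact: hstep_deg.
have -> : p ++ (a ++ tface 2 t :: tface 0 t :: b) ++ q =
          (p ++ a) ++ tface 2 t :: tface 0 t :: (b ++ q) by rewrite -!catA.
have -> : p ++ (a ++ tface 1 t :: b) ++ q = (p ++ a) ++ tface 1 t :: (b ++ q) by rewrite -!catA.
exact: hstep_tri.
Qed.

Lemma chain_split (x z : S 0) p q : is_chain x (p ++ q) z -> exists y, is_chain x p y /\ is_chain y q z.
Proof.
elim: p x => [|e p IH] x /=; first by move=> H; exists x.
case=> H1 /IH [y [H2 H3]]; by exists y.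
Qed.

Lemma hequiv_ctx (x a b y : S 0) p q r r' :
  is_chain x p a -> is_chain b q y -> hequiv a b r r' -> hequiv x y (p ++ r ++ q) (p ++ r' ++ q).
Proof.
move=> Hp Hq; elim=> [r1 r2 [H1 H2 H3]|r1|r1 r2 _ IH|r1 r2 r3 _ IH1 _ IH2].
- apply: rst_step; split.
  + by apply: chain_cat Hp _; apply: chain_cat H1 Hq.
  + by apply: chain_cat Hp _; apply: chain_cat H2 Hq.
  + exact: hstep_ctx.
- exact: rst_refl.
- exact: rst_sym.
- exact: rst_trans IH1 IH2.
Qed.

Lemma tau1_refl (x : S 0) : tau1_iso x x.
Proof. by exists [::], [::]; split => //; apply: rst_refl. Qed.

Lemma tau1_sym (x y : S 0) : tau1_iso x y -> tau1_iso y x.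
Proof. by case=> p [q [H1 H2 H3 H4]]; exists q, p; split. Qed.

Lemma tau1_trans (x y z : S 0) : tau1_iso x y -> tau1_iso y z -> tau1_iso x z.
Proof.
case=> p [q [H1 H2 H3 H4]] [p' [q' [H1' H2' H3' H4']]].
exists (p ++ p'), (q' ++ q); split.
- exact: chain_cat H1 H1'.
- exact: chain_cat H2' H2.
- have E1 := hequiv_ctx H1 H2 H3'.
  have -> : (p ++ p') ++ (q' ++ q) = p ++ (p' ++ q') ++ q by rewrite -!catA.
  by apply: rst_trans E1 _; exact: H3.
- have E1 := hequiv_ctx H2' H1' H4.
  have -> : (q' ++ q) ++ (p ++ p') = q' ++ (q ++ p) ++ p' by rewrite -!catA.
  by apply: rst_trans E1 _; exact: H4'.
Qed.

Lemma esrc_edeg (v : S 0) : esrc (edeg v) = v.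
Proof. by rewrite /esrc /edeg -act_comp (hom0_eq (hcomp _ _) (hid 0)) act_id. Qed.
Lemma etgt_edeg (v : S 0) : etgt (edeg v) = v.
Proof. by rewrite /etgt /edeg -act_comp (hom0_eq (hcomp _ _) (hid 0)) act_id. Qed.

Lemma hequiv_tri (x : S 0) (t : S 2) :
  is_chain x [:: tface 2 t; tface 0 t] x -> tface 1 t = edeg x ->
  hequiv x x [:: tface 2 t; tface 0 t] [::].
Proof.
move=> Hc E1.
have Hd : is_chain x [:: edeg x] x by rewrite /= esrc_edeg etgt_edeg.
apply: (@rst_trans _ _ _ [:: edeg x]).
  apply: rst_step; split => //; rewrite -E1.
  exact: (hstep_tri [::] [::] t).
apply: rst_step; split => //.
exact: (hstep_deg [::] [::] x).
Qed.
End Tau.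


Definition Eb : sSet.
Proof.
refine (@SSet (fun m => {ffun 'I_m.+1 -> bool}) (fun m n f al => [ffun i => al (hfun f i)]) _ _).
- by move=> n al; apply/ffunP => i; rewrite !ffunE hidE.
- by move=> m n p f g al; apply/ffunP => i; rewrite !ffunE hcompE.
Defined.

Section Homot.
Variables (A Z : sSet) (H : sMap (sProd A Eb) A) (r : sMap A A).
Hypothesis H0 : forall m (x : A m), fn H ((x, [ffun _ => false]) : sProd A Eb m) = x.
Hypothesis H1 : forall m (x : A m), fn H ((x, [ffun _ => true]) : sProd A Eb m) = fn r x.
Variable g : FunS A Z 0.

Definition Tf N (be : 'I_N.+1 -> bool) k (xp : sProd A (Delta N) k) : Z k :=
  fn g ((fn H ((xp.1, [ffun i => be (hfun xp.2 i)]) : sProd A Eb k), hconst k) : sProd A (Delta 0) k).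

Lemma Tf_nat N (be : 'I_N.+1 -> bool) k k' (f : hom k k') (xp : sProd A (Delta N) k') :
  Tf be (act f xp) = act f (Tf be xp).
Proof.
case: xp => x ph; rewrite /Tf -fn_nat /= -fn_nat /=.
congr (fn g (fn H (_, _), _)); last exact: hom0_eq.
by apply/ffunP => i; rewrite !ffunE hcompE.
Qed.

Definition T N be : FunS A Z N := @SMap _ _ (@Tf N be) (fun k k' f xp => Tf_nat be f xp).

Lemma T_act N N' (ph : hom N' N) be : act ph (T be) = T (fun i => be (hfun ph i)).
Proof.
apply: sMap_eq => k [x ps] /=; rewrite /Tf /=.
by congr (fn g (fn H (_, _), _)); apply/ffunP => i; rewrite !ffunE hcompE.
Qed.

Lemma T_ext N (be1 be2 : 'I_N.+1 -> bool) : be1 =1 be2 -> T be1 = T be2.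
Proof.
move=> E; apply: sMap_eq => k [x ps] /=; rewrite /Tf /=.
by congr (fn g (fn H (_, _), _)); apply/ffunP => i; rewrite !ffunE E.
Qed.

Lemma T_false : T (fun _ : 'I_1 => false) = g.
Proof.
apply: sMap_eq => k [x ps] /=; rewrite /Tf /=.
have -> : [ffun _ : 'I_k.+1 => false] = [ffun _ => false] by [].
by rewrite H0 (hom0_eq ps (hconst k)).
Qed.

Definition g' : FunS A Z 0 := sComp g (prodmap r (sId (Delta 0))).

Lemma T_true : T (fun _ : 'I_1 => true) = g'.
Proof.
apply: sMap_eq => k [x ps] /=; rewrite /Tf /=.
by rewrite H1 (hom0_eq ps (hconst k)).
Qed.

Definition e1 := T (fun i : 'I_2 => val i == 1).
Definition e2 := T (fun i : 'I_2 => val i == 0).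

Ltac ordt := move=> [[|[|[|]]] ?] //=; rewrite ?mk_homE /= /bump ?inordK //.

Lemma esrc_e1 : esrc e1 = g.
Proof. by rewrite /esrc /e1 T_act; apply: etrans T_false; apply: T_ext; ordt. Qed.
Lemma etgt_e1 : etgt e1 = g'.
Proof. by rewrite /etgt /e1 T_act; apply: etrans T_true; apply: T_ext; ordt. Qed.
Lemma esrc_e2 : esrc e2 = g'.
Proof. by rewrite /esrc /e2 T_act; apply: etrans T_true; apply: T_ext; ordt. Qed.
Lemma etgt_e2 : etgt e2 = g.
Proof. by rewrite /etgt /e2 T_act; apply: etrans T_false; apply: T_ext; ordt. Qed.

Definition t1 := T (fun i : 'I_3 => val i == 1).
Definition t2 := T (fun i : 'I_3 => val i != 1).



Lemma t1_faces : [/\ tface 2 t1 = e1, tface 0 t1 = e2 & tface 1 t1 = edeg g].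
Proof.
have -> : edeg g = edeg (T (fun _ : 'I_1 => false)) by rewrite T_false.
rewrite /tface /t1 /e1 /e2 /edeg !T_act; split; apply: T_ext; ordt.
Qed.

Lemma t2_faces : [/\ tface 2 t2 = e2, tface 0 t2 = e1 & tface 1 t2 = edeg g'].
Proof.
have -> : edeg g' = edeg (T (fun _ : 'I_1 => true)) by rewrite T_true.
rewrite /tface /t2 /e1 /e2 /edeg !T_act; split; apply: T_ext; ordt.
Qed.

Lemma homotopy_iso : tau1_iso g' g.
Proof.
have [A1 A2 A3] := t1_faces; have [B1 B2 B3] := t2_faces.
have c1 : forall (S : sSet) (a : S 1) x y, esrc a = x -> etgt a = y -> is_chain x [:: a] y.
  by move=> S a x y H2 H3; split.
have c2 : forall (S : sSet) (a b : S 1) x y z, esrc a = x -> etgt a = y -> esrc b = y -> etgt b = z ->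
    is_chain x [:: a; b] z.
  by move=> S a b x y z H2 H3 H4 H5; split => //; rewrite H3; split.
exists [:: e2], [:: e1]; split.
- exact: c1 esrc_e2 etgt_e2.
- exact: c1 esrc_e1 etgt_e1.
- rewrite cat1s -B1 -B2; apply: hequiv_tri => //.
  rewrite B1 B2; exact: c2 esrc_e2 etgt_e2 esrc_e1 etgt_e1.
- rewrite cat1s -A1 -A2; apply: hequiv_tri => //.
  rewrite A1 A2; exact: c2 esrc_e1 etgt_e1 esrc_e2 etgt_e2.
Qed.
End Homot.


Definition pre0 (A B Z : sSet) (u : sMap A B) (h : FunS B Z 0) : FunS A Z 0 :=
  sComp h (prodmap u (sId (Delta 0))).

Definition preS (A B Z : sSet) (u : sMap A B) : sMap (FunS B Z) (FunS A Z).
Proof.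
refine (@SMap (FunS B Z) (FunS A Z) (fun n h => sComp h (prodmap u (sId (Delta n)))) _).
by move=> m n f h; apply: sMap_eq => k [x y].
Defined.

Lemma iso_pre (A B Z : sSet) (u : sMap A B) (h1 h2 : FunS B Z 0) :
  tau1_iso h1 h2 -> tau1_iso (pre0 u h1) (pre0 u h2).
Proof. exact: (tau1_iso_map (preS Z u)). Qed.

Lemma pre_comp (A B C Z : sSet) (u : sMap A B) (v : sMap B C) (h : FunS C Z 0) :
  pre0 (sComp v u) h = pre0 u (pre0 v h).
Proof. by apply: sMap_eq => k [x y]. Qed.

Definition tbij (A B : sSet) (u : sMap A B) (Z : sSet) : Prop :=
  (forall g : FunS A Z 0, exists h : FunS B Z 0, tau1_iso (pre0 u h) g) /\
  (forall h1 h2 : FunS B Z 0, tau1_iso (pre0 u h1) (pre0 u h2) -> tau1_iso h1 h2).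

Lemma tbij_comp (A B C Z : sSet) (u : sMap A B) (v : sMap B C) :
  tbij u Z -> tbij v Z -> tbij (sComp v u) Z.
Proof.
move=> [Su Iu] [Sv Iv]; split.
- move=> g; have [h Hh] := Su g; have [k Hk] := Sv h.
  exists k; rewrite pre_comp; apply: tau1_trans Hh.
  exact: iso_pre.
- by move=> k1 k2; rewrite !pre_comp => /Iu /Iv.
Qed.

Lemma tbij_cancel (A B C Z : sSet) (u : sMap A B) (v : sMap B C) :
  tbij v Z -> tbij (sComp v u) Z -> tbij u Z.
Proof.
move=> [Sv Iv] [Svu Ivu]; split.
- move=> g; have [k Hk] := Svu g; exists (pre0 v k); by rewrite -pre_comp.
- move=> h1 h2 H12.
  have [k1 Hk1] := Sv h1; have [k2 Hk2] := Sv h2.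
  have : tau1_iso (pre0 (sComp v u) k1) (pre0 (sComp v u) k2).
    rewrite !pre_comp; apply: tau1_trans (iso_pre u Hk1) _.
    apply: tau1_trans H12 _; apply: tau1_sym; exact: iso_pre.
  move/Ivu => Hk.
  apply: tau1_trans (tau1_sym Hk1) _; apply: tau1_trans (iso_pre v Hk) Hk2.
Qed.

Lemma sMap_ext_eq (A B C D : sSet) (f : sMap A B) (g : sMap B D) (f' : sMap A C) (g' : sMap C D) :
  (forall n x, fn g (fn f (n:=n) x) = fn g' (fn f' x)) -> sComp g f = sComp g' f'.
Proof. by move=> Hfg; apply: sMap_eq => n x /=. Qed.

Lemma tbij_transfer (A B C D : sSet) (f : sMap A B) (g : sMap B D) (f' : sMap A C) (g' : sMap C D) Z :
  sComp g f = sComp g' f' -> tbij f' Z -> tbij g' Z -> tbij g Z -> tbij f Z.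
Proof.
move=> Efg H1 H2 H3; apply: (tbij_cancel H3); rewrite Efg.
exact: tbij_comp.
Qed.

Section Rows.
Variables (X : bsSet) (HX : vfibrant X) (n : nat).

Definition sX : sMap (row X 0) (row X n).
Proof.
refine (@SMap (row X 0) (row X n) (fun m x => bact (hid m) (hconst n) x) _).
by move=> m m' f x /=; rewrite !bactC !hcomp_id_l !hcomp_id_r.
Defined.

Lemma ps_id m (x : row X 0 m) : fn (pX X n) (fn sX x) = x.
Proof. by rewrite /= bactC hcomp_id_l (hom0_eq (hcomp _ _) (hid 0)) bact_id. Qed.

Definition rX : sMap (row X n) (row X n) := sComp sX (pX X n).

Definition PLc m (z : sProd (row X n) Eb m) : Prop := forall i, z.2 i = z.2 ord0.

Lemma PLc_s m m' (f : hom m' m) z : PLc z -> PLc (act f z).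
Proof. by rewrite /PLc => H i /=; rewrite !ffunE H (H (hfun f ord0)). Qed.

Definition ahom m (z : sProd (row X n) Eb m) (h : PLc z) : row X n m :=
  if z.2 ord0 then fn rX z.1 else z.1.

Lemma ahom_nat m m' (f : hom m' m) z (h : PLc z) (h' : PLc (act f z)) :
  ahom h' = act f (ahom h).
Proof.
rewrite /ahom /= ffunE (h (hfun f ord0)).
by case: (z.2 ord0) => //; rewrite !bactC !hcomp_id_l !hcomp_id_r.
Qed.

Definition bhom : sMap (sProd (row X n) Eb) (row X 0) :=
  @SMap (sProd (row X n) Eb) (row X 0) (fun m (z : sProd (row X n) Eb m) => fn (pX X n) z.1) (fun m m' f (z : sProd (row X n) Eb m') => fn_nat (pX X n) f z.1).

Lemma ahom_over m (z : sProd (row X n) Eb m) (h : PLc z) : fn (pX X n) (ahom h) = fn bhom z.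
Proof. rewrite /ahom; case: (z.2 ord0) => //; exact: ps_id. Qed.

Lemma tbij_pX Z : tbij (pX X n) Z.
Proof.
have [Hm [HH0 _]] := skel_lift PLc_s ahom_nat ahom_over (trivfib_pX HX).
have Pf : forall m (x : row X n m) (c : bool), PLc ((x, [ffun _ => c]) : sProd (row X n) Eb m).
  by move=> m x c i /=; rewrite !ffunE.
have H0 : forall m (x : row X n m), fn Hm ((x, [ffun _ => false]) : sProd (row X n) Eb m) = x.
  by move=> m x; rewrite (HH0 m _ (Pf m x _)) /ahom ffunE.
have H1 : forall m (x : row X n m), fn Hm ((x, [ffun _ => true]) : sProd (row X n) Eb m) = fn rX x.
  by move=> m x; rewrite (HH0 m _ (Pf m x _)) /ahom ffunE.
split.
- move=> g; exists (pre0 sX g).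
  have -> : pre0 (pX X n) (pre0 sX g) = g' rX g by apply: sMap_eq => k [x y].
  exact: homotopy_iso H0 H1 g.
- move=> h1 h2 /(iso_pre sX); rewrite -!pre_comp.
  have E : forall h : FunS (row X 0) Z 0, pre0 (sComp (pX X n) sX) h = h.
    by move=> h; apply: sMap_eq => k [x y]; exact: (congr1 (fun w => fn h ((w, y) : sProd (row X 0) (Delta 0) k)) (ps_id x)).
  by rewrite !E.
Qed.
End Rows.

Lemma wce_tbij (A B : sSet) (u : sMap A B) :
  wce u <-> (forall Z, quasi_category Z -> tbij u Z).
Proof. by []. Qed.

Theorem proposition2p9 (X Y : bsSet) (f : bMap X Y) :
  vfibrant X -> vfibrant Y ->
  ((forall n : nat, wce (rowmap f n)) <-> wce (rowmap f 0)).
Proof.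
move=> HX HY; split; first by move=> H; exact: H 0.
move=> H0 n Z HZ.
have E : sComp (pX Y n) (rowmap f n) = sComp (rowmap f 0) (pX X n).
  by apply: sMap_eq => m x /=; rewrite bfn_nat.
apply: (tbij_transfer E (tbij_pX HX n Z) (H0 Z HZ) (tbij_pX HY n Z)).
Qed.
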